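(* There is no $(v,[k_1,k_2,1],\lambda)$ Hadamard partitioned difference family, for any integers $v,k_1,k_2,\lambda$.
   Context: $G$ is a finite group of order $v$ written additively, with difference $x-y:=x+(-y)$. For $B\subseteq G$, $\Delta B$ is the multiset $\{x-y: x,y\in B, x\neq y\}$; for $\mathcal{F}=\{B_1,\dots,B_t\}$, $\Delta\mathcal{F}$ is the multiset union of the $\Delta B_i$. A $(v,[k_1,\dots,k_t],\lambda)$ partitioned difference family (PDF) is a collection $\{B_1,\dots,B_t\}$ of subsets partitioning some group $G$ of order $v$ with $|B_i|=k_i$ such that $\Delta\mathcal{F}$ contains every non-zero element of $G$ exactly $\lambda$ times. It is Hadamard (HPDF) if $v=2\lambda$. *)

(* Defs.v *)
From mathcomp Require Import all_boot all_fingroup.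
Set Implicit Arguments. Unset Strict Implicit. Unset Printing Implicit Defensive.
Local Open Scope group_scope.

(* The paper writes the group additively with x - y := x + (-y); in
   MathComp's multiplicative finGroupType notation this is x * y^-1. *)

Definition diff_mult (gT : finGroupType) (B : {set gT}) (g : gT) : nat :=
  #|[set p : gT * gT | [&& p.1 \in B, p.2 \in B, p.1 != p.2 & p.1 * p.2^-1 == g]]|.

Definition is_PDF (gT : finGroupType) (G : {group gT}) (F : seq {set gT})
    (v : nat) (ks : seq nat) (lambda : nat) : Prop :=
  #|G| = v /\
      size F = size ks /\
      (forall i, i < size F -> nth set0 F i != set0) /\
      (forall i j, i < size F -> j < size F -> i != j ->
         [disjoint nth set0 F i & nth set0 F j]) /\
      \bigcup_(B <- F) B = G :> {set gT} /\
      (forall i, i < size F -> #|nth set0 F i| = nth 0%N ks i) /\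
      (forall g, g \in G -> g != 1 -> \sum_(B <- F) diff_mult B g = lambda).

Definition is_HPDF (gT : finGroupType) (G : {group gT}) (F : seq {set gT})
    (v : nat) (ks : seq nat) (lambda : nat) : Prop :=
  is_PDF G F v ks lambda /\ v = (2 * lambda)%N.

(* Main.v *)
Require Import Defs.
From mathcomp Require Import all_boot all_order all_algebra all_fingroup all_solvable all_field.
From mathcomp Require Import ring zify.
Set Implicit Arguments. Unset Strict Implicit. Unset Printing Implicit Defensive.
Import GRing.Theory Num.Theory.

Section LinAlg.
Local Open Scope ring_scope.

Lemma idem_aux m r (C : 'M[algC]_(m, r)) (R : 'M_(r, m)) (D : 'M_(r, m)) :
  D *m C = 1%:M -> row_free R -> (C *m R) *m (C *m R) = C *m R -> R *m C = 1%:M.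
Proof.
move=> DC Rf PP; apply: (row_free_inj Rf); rewrite /= mul1mx.
have: D *m ((C *m R) *m (C *m R)) = D *m (C *m R) by rewrite PP.
by rewrite !mulmxA DC !mul1mx.
Qed.

Lemma tr_idem m (P : 'M[algC]_m) : P *m P = P -> \tr P = (\rank P)%:R.
Proof.
move=> PP.
have [D DC] : exists D, D *m col_base P = 1%:M by apply/row_fullP; exact: col_base_full.
have eP : col_base P *m row_base P = P := mulmx_base P.
have RC := idem_aux DC (row_base_free P) (etrans (congr2 mulmx eP eP) (etrans PP (esym eP))).
by rewrite -{1}eP mxtrace_mulC RC mxtrace1.
Qed.

Section Alg.
Variables (m : nat) (A J : 'M[algC]_m) (k v p q r : algC).
Hypotheses (AJ : A *m J = k *: J) (JA : J *m A = k *: J) (JJ : J *m J = v *: J)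
  (AA : A *m A = p%:M + q *: A + r *: J).

Definition M a b c := a%:M + b *: A + c *: J.

Lemma Madd a b c a' b' c' : M a b c + M a' b' c' = M (a + a') (b + b') (c + c').
Proof.
rewrite /M !scalerDl raddfD /= addrACA; congr (_ + _); exact: addrACA.
Qed.

Lemma Mscale s a b c : s *: M a b c = M (s * a) (s * b) (s * c).
Proof. by rewrite /M !scalerDr !scalerA scale_scalar_mx. Qed.

Lemma MA : A = M 0 1 0.
Proof. by rewrite /M scale1r !scale0r raddf0 addr0 add0r. Qed.
Lemma MJ : J = M 0 0 1.
Proof. by rewrite /M scale1r !scale0r raddf0 !add0r. Qed.
Lemma MI : 1%:M = M 1 0 0.
Proof. by rewrite /M !scale0r !addr0. Qed.
Lemma Msc a : a%:M = M a 0 0.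
Proof. by rewrite /M !scale0r !addr0. Qed.

Lemma AM a b c : A *m M a b c = M (b * p) (a + b * q) (b * r + c * k).
Proof.
rewrite {1}/M !mulmxDr mul_mx_scalar -!scalemxAr AA AJ -/(M p q r).
rewrite {1}MA MJ !Mscale !Madd; congr M; ring.
Qed.

Lemma JM a b c : J *m M a b c = M 0 0 (a + b * k + c * v).
Proof.
rewrite {1}/M !mulmxDr mul_mx_scalar -!scalemxAr JA JJ.
rewrite !MJ !Mscale !Madd; congr M; ring.
Qed.

Lemma Mmul a b c a' b' c' : M a b c *m M a' b' c' =
  M (a * a' + b * b' * p) (a * b' + b * a' + b * b' * q)
    (a * c' + c * a' + b * b' * r + (b * c' + c * b') * k + c * c' * v).
Proof.
rewrite {1}/M !mulmxDl mul_scalar_mx -!scalemxAl AM JM !Mscale !Madd; congr M; ring.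
Qed.

Lemma MJr a b c : M a b c *m J = (a + b * k + c * v) *: J.
Proof.
rewrite {1}/M !mulmxDl mul_scalar_mx -!scalemxAl AJ JJ MJ !Mscale !Madd; congr M; ring.
Qed.

End Alg.

Lemma trJ m : \tr (const_mx 1 : 'M[algC]_m) = m%:R.
Proof.
rewrite /mxtrace (eq_bigr (fun _ => 1)) => [|i _]; last by rewrite mxE.
by rewrite sumr_const card_ord.
Qed.

Lemma JJm m : (const_mx 1 : 'M[algC]_m) *m (const_mx 1 : 'M_m) = m%:R *: const_mx 1.
Proof.
apply/matrixP => i j; rewrite !mxE (eq_bigr (fun _ => 1)) => [|l _]; last by rewrite !mxE mulr1.
by rewrite sumr_const card_ord mulr1.
Qed.

Lemma eq_via (x y p q : algC) : p = q -> x = q -> p = y -> x = y.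
Proof. by move=> -> -> ->. Qed.

Theorem LA m (A : 'M[algC]_m) (k lam : nat) (i0 : 'I_m) :
  A *m (const_mx 1 : 'M_m) = k%:R *: const_mx 1 -> (const_mx 1 : 'M_m) *m A = k%:R *: const_mx 1 ->
  \tr A = 0 ->
  A *m A = ((lam%:R - 2) / 2)%:M + (-1) *: A + ((2 * k%:R + 2 - lam%:R) / 2) *: (const_mx 1 : 'M_m) ->
  (2 * k%:R + 1) ^+ 2 = 2 * (2 * k%:R + 2 - lam%:R) * m%:R + (2 * lam%:R - 3) :> algC /\
  exists rk : nat, (2 * rk%:R - (m%:R - 1)) ^+ 2 * (2 * lam%:R - 3) = (m%:R - (2 * k%:R + 1)) ^+ 2 :> algC.
Proof.
set J := const_mx 1 => AJ JA trA AA.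
have JJ : J *m J = m%:R *: J by exact: JJm.
have Mm := Mmul AJ JA JJ AA.
have MJ := MJr AJ JJ.
have Vn0 : m%:R != 0 :> algC by rewrite pnatr_eq0; case: (m) i0 => [[]|].
have Rel : (2 * k%:R + 1) ^+ 2 = 2 * (2 * k%:R + 2 - lam%:R) * m%:R + (2 * lam%:R - 3) :> algC.
  have e1 := MJ 1 2 0.
  have e2 : (M A J 1 2 0 *m M A J 1 2 0) *m J = M A J 1 2 0 *m (M A J 1 2 0 *m J) by rewrite mulmxA.
  rewrite e1 -scalemxAr e1 scalerA Mm MJ in e2.
  have := congr1 (fun X : 'M_m => X i0 i0) e2; rewrite !mxE mulr1 mulr1 => e3.
  by apply: (eq_via e3);  field.
split=> //.
have D0 : 2 * lam%:R - 3 != 0 :> algC.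
  rewrite subr_eq0  -natrM eqr_nat; apply/eqP; lia.
set t := sqrtC (2 * lam%:R - 3 : algC).
have ht : t ^+ 2 = 2 * lam%:R - 3 by exact: sqrtCK.
have tn0 : t != 0 by rewrite sqrtC_eq0.
have hL : lam%:R = (t ^+ 2 + 3) / 2 by rewrite ht; field.
set a := (1 + t^-1) / 2; set b := t^-1; set c := - (t + (2 * k%:R + 1)) / (2 * m%:R * t).
have PP : M A J a b c *m M A J a b c = M A J a b c.
  rewrite Mm; congr M.
  - by rewrite /a /b  hL; field.
  - by rewrite /a /b; field.
  - apply: subr0_eq.
    have -> : a * c + c * a + b * b * ((2 * k%:R + 2 - lam%:R) / 2) +
      (b * c + c * b) * k%:R + c * c * m%:R - c =
      - ((2 * k%:R + 1) ^+ 2 - (2 * (2 * k%:R + 2 - lam%:R) * m%:R + (2 * lam%:R - 3)))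
        / (4 * m%:R * t ^+ 2).
      by rewrite /a /b /c hL; field; rewrite tn0 Vn0.
    by rewrite Rel subrr oppr0 mul0r.
exists (\rank (M A J a b c)).
have trP := tr_idem PP.
have trM : \tr (M A J a b c) = a * m%:R + c * m%:R.
  rewrite /M !mxtraceD !mxtraceZ mxtrace_scalar trA trJ mulr0 addr0; congr (_ + _); by rewrite mulr_natr.
have e : (2 * (\rank (M A J a b c))%:R - (m%:R - 1)) * t = m%:R - (2 * k%:R + 1).
  by rewrite -trP trM /a /c; field; rewrite tn0 Vn0.
by rewrite -e exprMn ht.
Qed.

End LinAlg.

Section NumTh.
Local Open Scope ring_scope.
Lemma NT (L K R : int) :
  1 <= K -> K + 2 <= 2 * L -> 0 <= R ->
  (2 * K + 1) ^+ 2 = 2 * (2 * K + 2 - L) * (2 * L) + (2 * L - 3) ->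
  (2 * R - (2 * L - 1)) ^+ 2 * (2 * L - 3) = (2 * L - 2 * K - 1) ^+ 2 -> False.
Proof.
move=> h1 h2 h3 e1 e2.
have e3 : (2 * L - 2 * K - 1) ^+ 2 = 3 * (2 * L - 1) by nia.
have e4 : ((2 * R - (2 * L - 1)) ^+ 2 - 3) * (2 * L - 3) = 6 by nia.
have hd : 1 <= 2 * L - 3 by lia.
have hx : 1 <= (2 * R - (2 * L - 1)) ^+ 2 - 3 by nia.
have hL : L <= 4 by nia.
have : L = 2 \/ L = 3 \/ L = 4 by lia.
case=> [eL|[eL|eL]]; subst L; nia.
Qed.

End NumTh.

Definition Nn (gT : finGroupType) (S : {set gT}) (g : gT) : nat :=
  \sum_(u : gT) ((u \in S) && ((g * u)%g \in S)).

Lemma dm_N (gT : finGroupType) (S : {set gT}) (g : gT) :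
  g != 1%g -> diff_mult S g = Nn S g.
Proof.
move=> g1; rewrite /diff_mult -sum1dep_card.
rewrite (eq_bigl (fun p : gT * gT => (p.1 \in predT) && (p.2 \in predT) &&
   [&& p.1 \in S, p.2 \in S, p.1 != p.2 & (p.1 * p.2^-1)%g == g])) //.
rewrite big_mkcond /= -(pair_big predT predT (fun x y => if [&& x \in S, y \in S, x != y & (x * y^-1)%g == g] then 1 else 0)) /=.
rewrite exchange_big /Nn; apply: eq_bigr => y _.
rewrite (bigD1 (g * y)%g) //= big1 => [|x xgy].
  rewrite mulgK eqxx andbT addn0.
  have -> : ((g * y)%g != y) by apply: contra g1 => /eqP h; apply/eqP; apply: (mulIg y); rewrite h mul1g.
  by rewrite andbT andbC; case: (y \in S); case: ((g * y)%g \in S).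
have -> : ((x * y^-1)%g == g) = false.
  by apply/negbTE; apply: contra xgy => /eqP <-; rewrite mulgVK.
by rewrite !andbF.
Qed.

Local Open Scope ring_scope.

Definition ind (gT : finGroupType) (S : {set gT}) (u : gT) : algC := (u \in S)%:R.

Section Sums.
Variable gT : finGroupType.
Implicit Types (S : {set gT}) (G : {group gT}) (F : gT -> algC).

Lemma sum_ind S : \sum_u ind S u = #|S|%:R.
Proof.
rewrite -sum1_card natr_sum [RHS]big_mkcond /=; apply: eq_bigr => u _.
by rewrite /ind; case: (u \in S).
Qed.

Lemma sum_pt1 F z : \sum_u ind [set z] u * F u = F z.
Proof.
rewrite (bigD1 z) //= big1 => [|u uz]; rewrite /ind in_set1.
  by rewrite eqxx mul1r addr0.
by rewrite (negbTE uz) mul0r.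
Qed.

Lemma sum_pt2 F (g z : gT) : \sum_u F u * ind [set z] (g * u)%g = F (g^-1 * z)%g.
Proof.
rewrite (bigD1 (g^-1 * z)%g) //= big1 => [|u uz]; rewrite /ind in_set1.
  by rewrite mulKVg eqxx mulr1 addr0.
have -> : ((g * u)%g == z) = false.
  by apply/negbTE; apply: contra uz => /eqP <-; rewrite mulKg.
by rewrite mulr0.
Qed.

Lemma sum_G1 G S g : S \subset G -> g \in G -> \sum_u ind G u * ind S (g * u)%g = #|S|%:R.
Proof.
move=> sSG gG; rewrite -(sum_ind S) [RHS](reindex_inj (mulgI g)) /=.
apply: eq_bigr => u _; rewrite /ind; case: (boolP ((g * u)%g \in S)) => h.
  by rewrite -(groupMl u gG) (subsetP sSG _ h) mul1r.
by rewrite mulr0.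
Qed.

Lemma sum_G2 G S g : S \subset G -> g \in G -> \sum_u ind S u * ind G (g * u)%g = #|S|%:R.
Proof.
move=> sSG gG; rewrite -(sum_ind S); apply: eq_bigr => u _; rewrite /ind groupMl //.
case: (boolP (u \in S)) => h; last by rewrite mul0r.
by rewrite (subsetP sSG _ h) mulr1.
Qed.

Lemma Nn_ind S g : (Nn S g)%:R = \sum_u ind S u * ind S (g * u)%g.
Proof. by rewrite /Nn natr_sum; apply: eq_bigr => u _; rewrite /ind -natrM mulnb. Qed.

Lemma reindexG G F (a b : gT) : a \in G -> b \in G ->
  \sum_(w in G) F w = \sum_(u in G) F (a * u^-1 * b)%g.
Proof.
move=> aG bG.
have hinj : injective (fun u : gT => (a * u^-1 * b)%g).
  by move=> u1 u2 /= /mulIg /mulgI /invg_inj.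
rewrite (reindex_inj hinj) /=; apply: eq_bigl => u.
by rewrite groupMr // groupMl // groupV.
Qed.

End Sums.

Section Comb.
Variables (gT : finGroupType) (G : {group gT}) (B1 B2 : {set gT}) (z : gT) (lam : nat).
Hypotheses (hG : forall u, (u \in G) = [|| u \in B1, u \in B2 | u == z])
  (d12 : forall u, u \in B1 -> (u \in B2) = false)
  (z1 : z \notin B1) (z2 : z \notin B2)
  (hsum : forall g, g \in G -> g != 1%g -> (diff_mult B1 g + diff_mult B2 g)%N = lam)
  (hv : #|G| = (2 * lam)%N).

Lemma s1G : B1 \subset G.
Proof. by apply/subsetP => u h; rewrite hG h. Qed.
Lemma s2G : B2 \subset G.
Proof. by apply/subsetP => u h; rewrite hG h orbT. Qed.
Lemma zG : z \in G.
Proof. by rewrite hG eqxx !orbT. Qed.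
Lemma szG : [set z] \subset G.
Proof. by rewrite sub1set zG. Qed.

Lemma decomp u : ind B2 u = ind G u - ind B1 u - ind [set z] u.
Proof.
rewrite /ind hG in_set1.
case h1 : (u \in B1); case h2 : (u \in B2); case h3 : (u == z) => //=.
- by rewrite d12 in h2.
- by rewrite d12 in h2.
- by move/eqP: h3 h1 => ->; rewrite (negbTE z1).
- ring.
- by move/eqP: h3 h2 => ->; rewrite (negbTE z2).
all: ring.
Qed.

Lemma card_rel : #|G|%:R = #|B1|%:R + #|B2|%:R + 1 :> algC.
Proof.
have : \sum_u ind B2 u = \sum_u (ind G u - ind B1 u - ind [set z] u).
  by apply: eq_bigr => u _; rewrite decomp.
rewrite !sumrB !sum_ind cards1 => ->; ring.
Qed.

Lemma CL g : g \in G -> g != 1%g ->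
  (2 * Nn B1 g + ((g^-1 * z)%g \in B1) + ((g * z)%g \in B1) + lam = 2 * #|B1| + 2)%N.
Proof.
move=> gG g1.
have pw u : ind B2 u * ind B2 (g * u)%g =
   ind G u * ind G (g * u)%g - ind G u * ind B1 (g * u)%g - ind G u * ind [set z] (g * u)%g
   - ind B1 u * ind G (g * u)%g + ind B1 u * ind B1 (g * u)%g + ind B1 u * ind [set z] (g * u)%g
   - ind [set z] u * ind G (g * u)%g + ind [set z] u * ind B1 (g * u)%g
   + ind [set z] u * ind [set z] (g * u)%g.
  by rewrite !decomp; ring.
have e2 : (Nn B2 g)%:R = #|G|%:R - 2 * #|B1|%:R - 2 + (Nn B1 g)%:R
    + ind B1 (g^-1 * z)%g + ind B1 (g * z)%g :> algC.
  rewrite Nn_ind (eq_bigr _ (fun u _ => pw u)) !(big_split, sumrB) /=.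
  rewrite !sumrN (sum_G1 (subxx _) gG) (sum_G1 s1G gG) (sum_G1 szG gG) (sum_G2 s1G gG) -Nn_ind.
  rewrite (sum_pt2 (ind B1)) (sum_G2 szG gG) (sum_pt1 (fun u => ind B1 (g * u)%g)).
  rewrite (sum_pt1 (fun u => ind [set z] (g * u)%g)) cards1 /ind in_set1.
  have -> : ((g * z)%g == z) = false.
    by apply/negbTE; apply: contra g1 => /eqP h; apply/eqP; apply: (mulIg z); rewrite h mul1g.
  have -> : (false%:R : algC) = 0 by [].
  ring.
have e3 : (Nn B1 g + Nn B2 g)%:R = lam%:R :> algC by rewrite -!dm_N // hsum.
move: e3; rewrite natrD e2 hv => e3.
apply/eqP; rewrite -(eqr_nat algC) !natrD; apply/eqP.
move: e3; rewrite /ind !natrM => e3.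
apply: subr0_eq; rewrite -(subrr (lam%:R : algC)) -{2}e3; ring.
Qed.

Lemma sym g : g \in G -> ((g * z)%g \in B1) = ((g^-1 * z)%g \in B1).
Proof.
have [t tG ot] := @Cauchy _ 2 G isT (etrans (congr1 (dvdn 2) hv) (dvdn_mulr _ (dvdnn 2))).
have t1 : t != 1%g by apply/eqP => h; move: ot; rewrite h order1.
have tinv : (t^-1 = t)%g.
  have : (t ^+ 2 = 1)%g by rewrite -ot expg_order.
  by rewrite expgS expg1 => h; rewrite -[t^-1%g]mulg1 -h mulKg.
have := CL tG t1; rewrite tinv => ht.
move=> gG; case: (eqVneq g 1%g) => [->|g1]; first by rewrite invg1.
have := CL gG g1.
move: ht; case: ((t * z)%g \in B1); case: ((g * z)%g \in B1); case: ((g^-1 * z)%g \in B1) => //= h1 h2; exfalso; lia.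
Qed.

Lemma sum_inG (F : gT -> algC) : (forall u, u \notin G -> F u = 0) -> \sum_(u in G) F u = \sum_u F u.
Proof.
move=> h; rewrite big_mkcond /=; apply: eq_bigr => u _.
by case: ifP => // /negbT /h ->.
Qed.

Lemma sum_row x : x \in G ->
  \sum_(l < #|G|) ind B1 (x * (enum_val l)^-1 * z)%g = #|B1|%:R.
Proof.
move=> xG.
rewrite -(big_enum_val (fun w => ind B1 (x * w^-1 * z)%g)) (@reindexG _ G _ z x zG xG).
rewrite sum_inG => [|u uG]; last first.
  rewrite !invMg invgK mulKVg mulgVK /ind; case: (boolP (u \in B1)) => h //.
  by rewrite (subsetP s1G _ h) in uG.
by rewrite -sum_ind; apply: eq_bigr => u _; rewrite !invMg invgK mulKVg mulgVK.
Qed.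

Definition Amx : 'M[algC]_#|G| := \matrix_(i, j) ind B1 (enum_val i * (enum_val j)^-1 * z)%g.

Lemma AJ : Amx *m (const_mx 1 : 'M_#|G|) = #|B1|%:R *: const_mx 1.
Proof.
apply/matrixP => i j; rewrite !mxE (eq_bigr (fun l => ind B1 (enum_val i * (enum_val l)^-1 * z)%g)).
  by rewrite sum_row ?enum_valP // mulr1.
by move=> l _; rewrite !mxE mulr1.
Qed.

Lemma symA (x y : gT) : x \in G -> y \in G ->
  ind B1 (x * y^-1 * z)%g = ind B1 (y * x^-1 * z)%g.
Proof.
move=> xG yG; rewrite /ind sym ?groupM ?groupV //.
by rewrite invMg invgK.
Qed.

Lemma JA : (const_mx 1 : 'M_#|G|) *m Amx = #|B1|%:R *: const_mx 1.
Proof.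
apply/matrixP => i j; rewrite !mxE (eq_bigr (fun l => ind B1 (enum_val j * (enum_val l)^-1 * z)%g)).
  by rewrite sum_row ?enum_valP // mulr1.
by move=> l _; rewrite !mxE mul1r symA ?enum_valP.
Qed.

Lemma trA : \tr Amx = 0.
Proof.
rewrite /mxtrace big1 // => i _; rewrite mxE mulgV mul1g /ind (negbTE z1).
by [].
Qed.

Lemma lin_via (P Q X Y c : algC) : P = Q -> X - Y = c * (P - Q) -> X = Y.
Proof. by move=> -> h; apply: subr0_eq; rewrite h subrr mulr0. Qed.

Lemma AA : Amx *m Amx = ((lam%:R - 2) / 2)%:M + (-1) *: Amx +
   ((2 * #|B1|%:R + 2 - lam%:R) / 2) *: (const_mx 1 : 'M_#|G|).
Proof.
apply/matrixP => i j; rewrite !mxE.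
have xG := enum_valP i; have yG := enum_valP j.
have -> : \sum_l Amx i l * Amx l j = (Nn B1 (enum_val i * (enum_val j)^-1)%g)%:R.
  rewrite (eq_bigr (fun l => ind B1 (enum_val i * (enum_val l)^-1 * z)%g *
     ind B1 (enum_val j * (enum_val l)^-1 * z)%g)); last first.
    by move=> l _; rewrite !mxE (symA (enum_valP l) yG).
  rewrite -(big_enum_val (fun w => ind B1 (enum_val i * w^-1 * z)%g *
     ind B1 (enum_val j * w^-1 * z)%g)) (@reindexG _ G _ z (enum_val j) zG yG).
  rewrite sum_inG => [|u uG]; last first.
    rewrite !invMg !invgK !mulgA !mulgVK mulgV mul1g /ind.
    case: (boolP (u \in B1)) => h; last by rewrite mulr0.
    by rewrite (subsetP s1G _ h) in uG.
  rewrite Nn_ind; apply: eq_bigr => u _.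
  by rewrite !invMg !invgK !mulgA !mulgVK mulgV mul1g mulrC.
case: (eqVneq i j) => [<-|ij].
  rewrite !mulgV mulr1n mul1g /ind (negbTE z1) mulr0 addr0 mulr1.
  have -> : (Nn B1 1%g)%:R = #|B1|%:R :> algC.
    by rewrite Nn_ind -sum_ind; apply: eq_bigr => u _; rewrite mul1g /ind; case: (u \in B1); rewrite /= ?mulr1 ?mul0r.
  by field.
rewrite mulr0n add0r mulr1.
have gG : (enum_val i * (enum_val j)^-1)%g \in G by rewrite groupM ?groupV.
have g1 : (enum_val i * (enum_val j)^-1)%g != 1%g.
  by rewrite divg_eq1; apply: contra ij => /eqP /enum_val_inj ->.
have := CL gG g1; rewrite -(sym gG) => hc.
have E : (2 * Nn B1 (enum_val i * (enum_val j)^-1)%g +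
   ((enum_val i * (enum_val j)^-1 * z)%g \in B1) +
   ((enum_val i * (enum_val j)^-1 * z)%g \in B1) + lam)%:R = (2 * #|B1| + 2)%:R :> algC.
  by rewrite hc.
move: E; rewrite !natrD => E.
apply: (lin_via (c := 1 / 2) E); rewrite /ind; by field.
Qed.

Lemma eq_via2 (x y p q : algC) : p = q -> x = p -> q = y -> x = y.
Proof. by move=> -> -> ->. Qed.

Lemma final : (0 < #|B1|)%N -> (0 < #|B2|)%N -> False.
Proof.
move=> k1p k2p.
have i0 : 'I_#|G| := Ordinal (cardG_gt0 G).
have [R1 [rk R2]] := LA i0 AJ JA trA AA.
have cn : #|G| = (#|B1| + #|B2| + 1)%N.
  by apply/eqP; rewrite -(eqr_nat algC) !natrD card_rel.
move: R1 R2; rewrite hv natrM => R1 R2.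
apply: (@NT lam%:Z #|B1|%:Z rk%:Z).
- lia.
- lia.
- lia.
- by apply: (@intr_inj algC); apply: (eq_via2 R1); ring.
- by apply: (@intr_inj algC); apply: (eq_via2 R2); ring.
Qed.

End Comb.

Lemma dm_single (gT : finGroupType) (z g : gT) : g != 1%g -> diff_mult [set z] g = 0%N.
Proof.
move=> g1; rewrite dm_N // /Nn big1 // => u _; rewrite !in_set1.
case: eqP => // ->; case: eqP => // h; exfalso; move: g1.
by rewrite -(mul1g z) mulgA mulg1 in h; move/mulIg: h => ->; rewrite eqxx.
Qed.

Theorem corollary4p3 (gT : finGroupType) (G : {group gT}) (F : seq {set gT})
    (v k1 k2 lambda : nat) :
  ~ is_HPDF G F v [:: k1; k2; 1%N] lambda.
Proof.
case=> [[hv [hsz [hne [hdis [hcov [hcard hsum]]]]]] hvl].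
case: F hsz hne hdis hcov hcard hsum => [|B1 [|B2 [|B3 [|? ?]]]] //= _ hne hdis hcov hcard hsum.
have /cards1P [z hz] : #|B3| == 1%N by rewrite (hcard 2%N).
subst B3.
have k1p : (0 < #|B1|)%N by rewrite card_gt0 (hne 0%N).
have k2p : (0 < #|B2|)%N by rewrite card_gt0 (hne 1%N).
have D12 := hdis 0%N 1%N isT isT isT.
have D13 := hdis 0%N 2%N isT isT isT.
have D23 := hdis 1%N 2%N isT isT isT.
rewrite /= in D12 D13 D23.
have d12 u : u \in B1 -> (u \in B2) = false by move=> h; exact: (disjointFr D12 h).
have z1 : z \notin B1 by apply/negbT; exact: (disjointFl D13 (set11 z)).
have z2 : z \notin B2 by apply/negbT; exact: (disjointFl D23 (set11 z)).
rewrite !big_cons big_nil setU0 in hcov.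
have hG u : (u \in G) = [|| u \in B1, u \in B2 | u == z] by rewrite -hcov !inE.
have hs g : g \in G -> g != 1%g -> (diff_mult B1 g + diff_mult B2 g)%N = lambda.
  move=> gG g1; have := hsum g gG g1; rewrite !big_cons big_nil dm_single //.
  by rewrite !addn0.
have hv' : #|G| = (2 * lambda)%N by rewrite hv hvl.
exact: (final hG d12 z1 z2 hs hv' k1p k2p).
Qed.
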